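(* Let $(G,+)$ be an abelian group with identity $0$. Let $M=(E,\mathcal{I})$ and $N=(E',\mathcal{I}')$ be two transversal matroids over $G$ with partitions $\{E_i\}_{i\in[n]}$ of $E$ and $\{E'_i\}_{i\in[n]}$ of $E'$, respectively, such that $|E_i|=|E'_i|$ for all $i$. Assume there exists a total order $\preceq$ on $E\cup E'\cup(E+E')\cup\{0\}$ compatible with the group structure of $G$ such that: (1) $E$ and $E'$ are both positive; (2) for all $1\le i<j\le n$: $E_i\prec E_j$, $E'_i\prec E'_j$, and $|E_i|>|E_j|$; (3) $\max E\preceq \max E'$. Then $M$ is matched to $N$.
   Context: Given a partition of a finite set $E$ into disjoint sets $E_1,\dots,E_l$, the transversal matroid on $E$ has as independent sets those $X\subseteq E$ with $|X\cap E_i|\le 1$ for all $i$. A matroid over $G$ is a matroid whose finite ground set is a subset of $G$. $E+E'=\{a+b: a\in E, b\in E'\}$. A total order $\preceq$ on $A\subseteq G$ is compatible with the group structure if for all $a,b,c\in A$, $a\preceq b$ implies $a+c\preceq b+c$. An element $x$ is positive if $0\prec x$; a set is positive if all its elements are positive. For sets $A,B$, $A\prec B$ means $a\prec b$ for all $a\in A$, $b\in B$ (where $\prec$ means $\preceq$ and $\ne$). For matroids $M,N$ over $G$ with $r(M)=r(N)=n>0$ and bases $\mathcal{M}=\{a_1,\dots,a_n\}$ of $M$ and $\mathcal{N}=\{b_1,\dots,b_n\}$ of $N$, $\mathcal{M}$ is matched to $\mathcal{N}$ if there is a permutation $\pi\in S_n$ with $a_i+b_{\pi(i)}\notin E(M)$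 for all $i$. $M$ is matched to $N$ if for every basis $\mathcal{M}$ of $M$ there exists a basis $\mathcal{N}$ of $N$ such that $\mathcal{M}$ is matched to $\mathcal{N}$. *)

(* Defs.v *)
From HB Require Import structures.
From mathcomp Require Import all_boot all_order all_algebra.
From mathcomp Require Import finmap.
Set Implicit Arguments. Unset Strict Implicit. Unset Printing Implicit Defensive.
Import GRing.Theory.
Local Open Scope fset_scope.
Local Open Scope ring_scope.

Section Defs.
Variable G : zmodType.

Definition is_partition (E : {fset G}) (n : nat) (Es : 'I_n -> {fset G}) : Prop :=
  (forall i, Es i != fset0) /\
  (forall i j : 'I_n, i != j -> Es i `&` Es j = fset0) /\
  (forall x, x \in E <-> exists i, x \in Es i).

(* independent sets of the transversal matroid on E given by the partition Es *)
Definition tindep (E : {fset G}) (n : nat) (Es : 'I_n -> {fset G}) (X : {fset G}) : Prop :=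
  X `<=` E /\ forall i, (#|` X `&` Es i| <= 1)%N.

Definition tbasis (E : {fset G}) (n : nat) (Es : 'I_n -> {fset G}) (X : {fset G}) : Prop :=
  tindep E Es X /\ forall Y, tindep E Es Y -> X `<=` Y -> Y = X.

Definition bases_matched (E B B' : {fset G}) : Prop :=
  exists f : G -> G, {in B &, injective f} /\ [fset f a | a in B] = B' /\
    forall a, a \in B -> a + f a \notin E.

Definition matched_to (E : {fset G}) n (Es : 'I_n -> {fset G})
  (E' : {fset G}) m (Es' : 'I_m -> {fset G}) : Prop :=
  forall B, tbasis E Es B -> exists B', tbasis E' Es' B' /\ bases_matched E B B'.

Definition inA (E E' : {fset G}) (x : G) : Prop :=
  x \in E \/ x \in E' \/ (exists a b, a \in E /\ b \in E' /\ x = a + b) \/ x = 0.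

Definition compatible_total_order (A : G -> Prop) (le : rel G) : Prop :=
  (forall x, A x -> le x x) /\
  (forall x y, A x -> A y -> le x y -> le y x -> x = y) /\
  (forall x y z, A x -> A y -> A z -> le x y -> le y z -> le x z) /\
  (forall x y, A x -> A y -> le x y \/ le y x) /\
  (forall a b c, A a -> A b -> A c -> A (a + c) -> A (b + c) ->
     le a b -> le (a + c) (b + c)).

Definition ltr_of (le : rel G) (x y : G) : bool := le x y && (x != y).

Definition is_max (le : rel G) (S : {fset G}) (m : G) : Prop :=
  m \in S /\ forall x, x \in S -> le x m.

End Defs.

(* Main.v *)
Require Import Defs.
From HB Require Import structures.
From mathcomp Require Import all_boot all_order all_algebra.
From mathcomp Require Import finmap zify.
Import GRing.Theory.
Local Open Scope fset_scope.
Local Open Scope ring_scope.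

Lemma card_le1P (T : choiceType) (S : {fset T}) :
  (#|` S| <= 1)%N <-> (forall x y, x \in S -> y \in S -> x = y).
Proof.
split.
- move=> H x y xS yS; apply/eqP; apply/negPn/negP => nxy.
  have : [fset x; y] `<=` S by apply/fsubsetP => z; rewrite !inE => /orP[] /eqP ->.
  move/fsubset_leq_card; rewrite cardfs2 nxy => H2.
  by have := leq_trans H2 H.
- move=> H; case: (fset_0Vmem S) => [->|[x xS]]; first by rewrite cardfs0.
  rewrite (cardfsD1 x) xS.
  suff -> : S `\ x = fset0 by rewrite cardfs0.
  apply/fsetP => z; rewrite !inE; apply/negP => /andP[zx zS].
  by move: zx; rewrite (H _ _ zS xS) eqxx.
Qed.

Lemma card_ord_lt n m : (m <= n)%N -> #|[set k : 'I_n | (k < m)%N]| = m.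
Proof.
move=> mn.
have -> : [set k : 'I_n | (k < m)%N] = [set widen_ord mn k | k : 'I_m].
  apply/setP => k; rewrite !inE; apply/idP/imsetP => [km|[j _ ->]].
    by exists (Ordinal km) => //; apply/val_inj.
  by rewrite /= ltn_ord.
rewrite card_imset ?card_ord //.
by move=> x y /(congr1 val) /= /val_inj.
Qed.

Lemma weight_le n (f : 'I_n -> nat) (i : 'I_n) (K : {set 'I_n}) :
  (forall x y : 'I_n, (x <= y)%N -> (f y <= f x)%N) ->
  (n - i <= #|K|)%N ->
  (\sum_(k : 'I_n | (i <= k)%N) f k <= \sum_(k in K) f k)%N.
Proof.
move=> mono hK.
set L := [set k : 'I_n | (i <= k)%N].
have cL : #|L| = (n - i)%N.
  have := cardsC [set k : 'I_n | (k < i)%N].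
  rewrite card_ord_lt ?(ltnW (ltn_ord i)) // card_ord.
  have -> : ~: [set k : 'I_n | (k < i)%N] = L.
    by apply/setP => k; rewrite !inE -leqNgt.
  lia.
rewrite (eq_bigl (fun k => k \in L)); last by move=> k; rewrite inE.
rewrite (big_setID (A:=L) K) (big_setID (A:=K) L) /= setIC.
have c1 : (\sum_(k in L :\: K) f k <= #|L :\: K| * f i)%N.
  rewrite -sum_nat_const; apply: leq_sum => k; rewrite !inE => /andP[_ ik].
  exact: mono.
have c2 : (#|K :\: L| * f i <= \sum_(k in K :\: L) f k)%N.
  rewrite -sum_nat_const; apply: leq_sum => k; rewrite !inE => /andP[ik _].
  by apply: mono; apply: ltnW; rewrite ltnNge.
have c3 : (#|L :\: K| <= #|K :\: L|)%N.
  have h1 := cardsID L K; have h2 := cardsID K L; rewrite setIC in h2; move: h1 h2 cL hK; clear; set a := #|K :&: L|; set b := #|L :\: K|; move=> h1 h2 h3 h4.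
  rewrite -h1 -h3 -h2 in h4. by rewrite -(leq_add2l a).
rewrite leq_add2l; apply: (leq_trans c1); apply: leq_trans c2.
by rewrite leq_mul2r c3 orbT.
Qed.
Lemma card_bigfcup_disj (T : choiceType) n (F : 'I_n -> {fset T}) (r : seq 'I_n) (P : pred 'I_n) :
  uniq r -> (forall i j, i != j -> F i `&` F j = fset0) ->
  #|` \bigcup_(j <- r | P j) F j| = (\sum_(j <- r | P j) #|` F j|)%N.
Proof.
move=> ur disj; elim: r ur => [|x r IH] /=.
  by rewrite !big_nil cardfs0.
move=> /andP[xr ur]; rewrite !big_cons; case: (P x); last exact: IH.
rewrite cardfsU IH //.
suff -> : F x `&` \bigcup_(j <- r | P j) F j = fset0 by rewrite cardfs0 subn0.
apply/fsetP => z; rewrite !inE; apply/negP => /andP[zx /bigfcupP[j /andP[jr _] zj]].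
have xj : x != j by apply/eqP => E; move: xr; rewrite E jr.
by have := disj _ _ xj; move/fsetP/(_ z); rewrite !inE zx zj.
Qed.

Lemma sum_filter_enum n (P : pred 'I_n) (F : 'I_n -> nat) :
  (\sum_(j <- filter P (enum 'I_n)) F j = \sum_(j | P j) F j)%N.
Proof. by rewrite big_filter big_enum_cond. Qed.

Definition badb {G : zmodType} (E : {fset G}) (a : G) (B : {fset G}) :=
  all (fun b => a + b \in E) B.

Lemma bad_count (G : zmodType) n (E E' : {fset G}) (Es Es' : 'I_n -> {fset G})
  (le : rel G) (i : 'I_n) (a : G) :
  is_partition E Es -> is_partition E' Es' ->
  (forall i, #|` Es i| = #|` Es' i|) ->
  compatible_total_order (inA E E') le ->
  (forall x, x \in E' -> ltr_of le 0 x) ->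
  (forall i j : 'I_n, (i < j)%N ->
     (forall a b, a \in Es i -> b \in Es j -> ltr_of le a b) /\
     (forall a b, a \in Es' i -> b \in Es' j -> ltr_of le a b) /\
     (#|` Es j| < #|` Es i|)%N) ->
  a \in Es i ->
  (i < #|[set j : 'I_n | ~~ badb E a (Es' j)]|)%N.
Proof.
move=> [_ [dE cE]] [_ [dE' cE']] card [_ [antis [_ [_ comp]]]] pos' ord ai.
have aE : a \in E by apply/cE; exists i.
rewrite ltnNge; apply/negP => hgood.
set K := [set j : 'I_n | badb E a (Es' j)].
have hK : (n - i <= #|K|)%N.
  have := cardsC K; rewrite card_ord.
  have -> : ~: K = [set j : 'I_n | ~~ badb E a (Es' j)].
    by apply/setP => j; rewrite !inE.
  move: hgood; clear; lia.
set S := (\sum_(k : 'I_n | (i <= k)%N) #|` Es k|)%N.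
have h1 : (S <= \sum_(k in K) #|` Es k|)%N.
  apply: weight_le => // x y; rewrite leq_eqVlt => /orP[/eqP xy|xy].
    by rewrite (val_inj xy).
  by apply: ltnW; case: (ord _ _ xy) => _ [].
set U := \bigcup_(j <- index_enum 'I_n | badb E a (Es' j)) Es' j.
have hU : #|` U| = (\sum_(k in K) #|` Es k|)%N.
  rewrite /U card_bigfcup_disj ?index_enum_uniq //.
  by apply: eq_big => [j|j _]; rewrite ?inE ?card.
set V := [fset a + b | b in U].
have hV : #|` V| = #|` U|.
  by rewrite card_in_imfset //= => x y _ _; apply: addrI.
set W := \bigcup_(k <- index_enum 'I_n | (i <= k)%N) Es k.
have hW : #|` W| = S.
  by rewrite /W card_bigfcup_disj ?index_enum_uniq.
have aW : a \in W.
  by apply/bigfcupP; exists i => //; rewrite leqnn mem_index_enum.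
have hVW : V `<=` W `\ a.
  apply/fsubsetP => z /imfsetP [b /= bU ->].
  case/bigfcupP: bU => j /andP [_ jbad] bj.
  have bE' : b \in E' by apply/cE'; exists j.
  have abE : a + b \in E by move/allP: jbad; apply.
  have /andP [lb nb] := pos' b bE'.
  have Aa : inA E E' a by left.
  have Ab : inA E E' b by right; left.
  have Aab : inA E E' (a + b) by left.
  have A0 : inA E E' 0 by right; right; right.
  have le_a_ab : le a (a + b).
    have := comp 0 b a A0 Ab Aa; rewrite add0r addrC => /(_ Aa Aab lb); done.
  have ab_ne : a + b != a.
    apply/eqP => e; move: nb; rewrite eq_sym; apply/negP; rewrite negbK.
    by apply/eqP; apply: (addrI a); rewrite addr0.
  rewrite !inE ab_ne /=.
  have [k abk] : exists k, a + b \in Es k by apply/cE.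
  apply/bigfcupP; exists k => //; rewrite mem_index_enum /=.
  rewrite leqNgt; apply/negP => ki.
  have /andP [l2 _] := (ord _ _ ki).1 _ _ abk ai.
  by move: ab_ne; rewrite (antis _ _ Aab Aa l2 le_a_ab) eqxx.
have := fsubset_leq_card hVW.
rewrite hV hU.
have := cardfsD1 a W; rewrite aW hW.
move: h1; clear => h1 h2 h3; rewrite add1n in h2.
have := leq_trans h1 h3; rewrite -/S.
clearbody S W; clear -h2; move: (#|` W `\ a|) h2 => w ->.
by rewrite ltnn.
Qed.
Lemma greedy n (good : 'I_n -> 'I_n -> bool) :
  (forall i : 'I_n, (i < #|[set j | good i j]|)%N) ->
  exists s : 'I_n -> 'I_n, injective s /\ forall i, good i (s i).
Proof.
move=> hg.
suff H : forall m, (m <= n)%N -> exists s : 'I_n -> 'I_n,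
  (forall i j : 'I_n, (i < m)%N -> (j < m)%N -> s i = s j -> i = j) /\
  (forall i : 'I_n, (i < m)%N -> good i (s i)).
  have [s [s1 s2]] := H n (leqnn n).
  by exists s; split => [i j|i]; [apply: s1 | apply: s2].
elim => [_|m IH mn].
  by exists id; split.
have [s [s1 s2]] := IH (ltnW mn).
set im := Ordinal mn.
set Used := [set s k | k in [set k : 'I_n | (k < m)%N]].
have cU : (#|Used| <= m)%N.
  by apply: leq_trans (leq_imset_card _ _) _; rewrite card_ord_lt // ltnW.
have : ~~ ([set j | good im j] \subset Used).
  apply/negP => /subset_leq_card h.
  by have := leq_trans (hg im) (leq_trans h cU); rewrite ltnn.
case/subsetPn => j; rewrite inE => gj jU.
exists (fun k => if k == im then j else s k); split.
- move=> x y; rewrite !ltnS => hx hy; move: hx hy.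
  rewrite [(x <= m)%N]leq_eqVlt [(y <= m)%N]leq_eqVlt => /orP[xe|xm] /orP[ye|ym].
  + by move=> _; apply: val_inj; rewrite /= (eqP xe) (eqP ye).
  + have -> : x == im by apply/eqP; apply: val_inj; rewrite /= (eqP xe).
    have -> : (y == im) = false by apply/negbTE/eqP => e; move: ym; rewrite e ltnn.
    move=> e; exfalso; move: jU; rewrite e; apply/negP/negPn.
    by apply/imsetP; exists y; rewrite ?inE.
  + have -> : y == im by apply/eqP; apply: val_inj; rewrite /= (eqP ye).
    have -> : (x == im) = false by apply/negbTE/eqP => e; move: xm; rewrite e ltnn.
    move=> e; exfalso; move: jU; rewrite -e; apply/negP/negPn.
    by apply/imsetP; exists x; rewrite ?inE.
  + have -> : (y == im) = false by apply/negbTE/eqP => e; move: ym; rewrite e ltnn.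
    have -> : (x == im) = false by apply/negbTE/eqP => e; move: xm; rewrite e ltnn.
    exact: s1.
- move=> x; rewrite ltnS leq_eqVlt => /orP[xe|xm].
  + have xe2 : x = im by apply: val_inj; rewrite /= (eqP xe).
    by rewrite xe2 eqxx.
  + have -> : (x == im) = false by apply/negbTE/eqP => e; move: xm; rewrite e ltnn.
    exact: s2.
Qed.

Lemma blk_uniq {G : zmodType} {n} {Es : 'I_n -> {fset G}} :
  (forall i j : 'I_n, i != j -> Es i `&` Es j = fset0) ->
  forall {x i j}, x \in Es i -> x \in Es j -> i = j.
Proof.
move=> d x i j xi xj; apply/eqP; apply/negPn/negP => ij.
by have := d _ _ ij; move/fsetP/(_ x); rewrite !inE xi xj.
Qed.

Theorem theorem2p15 (G : zmodType) (n : nat) (E E' : {fset G})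
  (Es Es' : 'I_n -> {fset G}) (le : rel G) :
  (0 < n)%N ->
  is_partition E Es -> is_partition E' Es' ->
  (forall i, #|` Es i| = #|` Es' i|) ->
  compatible_total_order (inA E E') le ->
  (* (1) E and E' are positive *)
  (forall x, x \in E -> ltr_of le 0 x) ->
  (forall x, x \in E' -> ltr_of le 0 x) ->
  (* (2) *)
  (forall i j : 'I_n, (i < j)%N ->
     (forall a b, a \in Es i -> b \in Es j -> ltr_of le a b) /\
     (forall a b, a \in Es' i -> b \in Es' j -> ltr_of le a b) /\
     (#|` Es j| < #|` Es i|)%N) ->
  (* (3) max E <= max E' *)
  (forall m m', is_max le E m -> is_max le E' m' -> le m m') ->
  matched_to E Es E' Es'.
Proof.
move=> n0 pE pE' card cto pos pos' ord _ B [[BE Bind] Bmax].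
have pE0 := pE; have pE'0 := pE'.
case: pE => [nE [dE cE]]; case: pE' => [nE' [dE' cE']].
have ex1 : forall i, exists x, (x \in B) && (x \in Es i).
  move=> i; case: (fset_0Vmem (B `&` Es i)) => [h|[x]]; last first.
    by rewrite inE => xB; exists x.
  exfalso; have /fset0Pn [y yi] := nE i.
  have yE : y \in E by apply/cE; exists i.
  have indY : tindep E Es (y |` B).
    split.
      by apply/fsubsetP => z; rewrite !inE => /orP[/eqP ->|/(fsubsetP BE)].
    move=> k; apply/card_le1P => u v; rewrite !inE.
    have Bk := (card_le1P _ _).1 (Bind k).
    move=> /andP[/orP[/eqP ->|uB] uk] /andP[/orP[/eqP ->|vB] vk] //.
    + have ki := blk_uniq dE yi uk; rewrite -ki in vk.
      by move/fsetP: h => /(_ v); rewrite !inE vB vk.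
    + have ki := blk_uniq dE yi vk; rewrite -ki in uk.
      by move/fsetP: h => /(_ u); rewrite !inE uB uk.
    + by apply: Bk; rewrite inE ?uB ?vB.
  have := Bmax _ indY (fsubsetU1 _ _); move/fsetP/(_ y); rewrite !inE eqxx /= => yB.
  by move/fsetP: h => /(_ y); rewrite !inE -yB yi.
pose aa i := xchoose (ex1 i).
have aaP i : (aa i \in B) && (aa i \in Es i) := xchooseP (ex1 i).
have Buniq : forall x i, x \in B -> x \in Es i -> x = aa i.
  move=> x i xB xi; have /andP [aB ai] := aaP i.
  by apply: ((card_le1P _ _).1 (Bind i)); rewrite inE ?xB ?xi ?aB ?ai.
have hg : forall i : 'I_n, (i < #|[set j | ~~ badb E (aa i) (Es' j)]|)%N.
  move=> i; apply: (@bad_count G n E E' Es Es' le i (aa i) pE0 pE'0 card cto pos' ord).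
  by case/andP: (aaP i).
have [s [sinj sgood]] := @greedy n _ hg.
have ex2 : forall i, exists b, (b \in Es' (s i)) && (aa i + b \notin E).
  move=> i; have := sgood i; rewrite /badb => /allPn [b bin bnot].
  by exists b; rewrite bin bnot.
pose bs i := xchoose (ex2 i).
have bsP i : (bs i \in Es' (s i)) && (aa i + bs i \notin E) := xchooseP (ex2 i).
have bsinj : injective bs.
  move=> i k e; apply: sinj; apply: (blk_uniq dE' (x := bs i)).
    by case/andP: (bsP i).
  by rewrite e; case/andP: (bsP k).
have sonto : forall j, exists i, s i = j.
  move=> j; have := inj_card_onto sinj (leqnn _) j.
  by case/codomP => i ->; exists i.
pose f x := if [pick i | x \in Es i] is Some i then bs i else 0.
have fE : forall x i, x \in Es i -> f x = bs i.
  move=> x i xi; rewrite /f; case: pickP => [k xk|none].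
    by rewrite (blk_uniq dE xk xi).
  by move: (none i); rewrite xi.
pose B' := [fset bs i | i in enum 'I_n].
have B'P : forall y, y \in B' -> exists i, y = bs i.
  by move=> y /imfsetP [i _ ->]; exists i.
have bsB' : forall i, bs i \in B'.
  by move=> i; apply/imfsetP; exists i; rewrite ?mem_enum.
exists B'; split.
- split.
  + split.
      apply/fsubsetP => y /B'P [i ->]; apply/cE'; exists (s i).
      by case/andP: (bsP i).
    move=> j; apply/card_le1P => u v; rewrite !inE.
    move=> /andP[/B'P [i ->] ui] /andP[/B'P [k ->] vk].
    congr bs; apply: sinj.
    have /andP [bi _] := bsP i; have /andP [bk _] := bsP k.
    by rewrite -(blk_uniq dE' ui bi) -(blk_uniq dE' vk bk).
  + move=> Y [YE Yind] B'Y; apply/fsetP => y; apply/idP/idP; last first.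
      by apply: (fsubsetP B'Y).
    move=> yY; have [j yj] : exists j, y \in Es' j by apply/cE'; apply: (fsubsetP YE).
    have [i si] := sonto j.
    have -> : y = bs i.
      apply: ((card_le1P _ _).1 (Yind j)); rewrite inE ?yY ?yj //.
      rewrite (fsubsetP B'Y) ?bsB' //=.
      by rewrite -si; case/andP: (bsP i).
    exact: bsB'.
- exists f; split; [|split].
  + move=> x y xB yB.
    have [i xi] : exists i, x \in Es i by apply/cE; apply: (fsubsetP BE).
    have [k yk] : exists k, y \in Es k by apply/cE; apply: (fsubsetP BE).
    rewrite (fE _ _ xi) (fE _ _ yk) => /bsinj ik.
    by rewrite (Buniq _ _ xB xi) (Buniq _ _ yB yk) ik.
  + apply/fsetP => z; apply/imfsetP/idP.
      case=> x /= xB ->.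
      have [i xi] : exists i, x \in Es i by apply/cE; apply: (fsubsetP BE).
      by rewrite (fE _ _ xi) bsB'.
    move=> /B'P [i ->]; exists (aa i) => /=; first by case/andP: (aaP i).
    by rewrite (fE (aa i) i) //; case/andP: (aaP i).
  + move=> x xB.
    have [i xi] : exists i, x \in Es i by apply/cE; apply: (fsubsetP BE).
    rewrite (fE _ _ xi) (Buniq _ _ xB xi).
    by case/andP: (bsP i).
Qed.
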